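(* (Laplace.) Let $\hat p^{l}_i=\frac{N_i}{ms}+\frac{Z_i}{ms}$ for $i\in[k]$, where $Z_1,\dots,Z_k$ are i.i.d. $\mathrm{Lap}(2m/\varepsilon)$. Then its user complexity satisfies $S^{l}_{m,\alpha,\varepsilon,0}=\mathcal O\left(\frac{k}{m\alpha^2}+\frac{k}{\alpha\varepsilon}\right)$. (Gaussian.) If $\varepsilon\le1$, let $\hat p^{g}_i=\frac{N_i}{ms}+\frac{Z_i}{ms}$ where $Z_i$ are i.i.d. $\mathcal N(0,4\log(1.25/\delta)m^2/\varepsilon^2)$. Then $S^{g}_{m,\alpha,\varepsilon,\delta}=\mathcal O\left(\frac{k}{m\alpha^2}+\frac{k}{\alpha\varepsilon}\sqrt{\log\frac1\delta}\right)$.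
   Context: Let $\Delta_k$ be the set of distributions on $[k]=\{1,\dots,k\}$. There are $s$ users each holding $m$ samples, all $sm$ samples i.i.d. from $p\in\Delta_k$; $N_i$ is the total number of samples over all users equal to $i$. For an estimator $A$ with output $\hat p^A$, $L(A,s,m,p)=\mathbb{E}[\sum_i|p_i-\hat p^A_i|]$ and the user complexity is $S^A_{m,\alpha,\varepsilon,\delta}=\min\{s:\sup_{p\in\Delta_k}L(A,s,m,p)\le\alpha\}$. $\mathrm{Lap}(b)$ is the Laplace distribution with density $\frac{1}{2b}e^{-|x|/b}$. Constants in $\mathcal O$ are universal. *)

(* Defs.v *)
From HB Require Import structures.
From mathcomp Require Import all_boot all_order all_algebra.
From mathcomp Require Import all_classical all_reals all_analysis.
Set Implicit Arguments. Unset Strict Implicit. Unset Printing Implicit Defensive.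
Import Order.TTheory GRing.Theory Num.Theory.
Local Open Scope classical_set_scope.
Local Open Scope ring_scope.

Definition in_simplex {R : realType} (k : nat) (p : 'I_k -> R) : Prop :=
  (forall i, 0 <= p i) /\ \sum_(i < k) p i = 1.

Definition laplace_pdf {R : realType} (b x : R) : R :=
  (2 * b)^-1 * expR (- `|x| / b).
Definition laplace_prob {R : realType} (b : R) : set R -> \bar R :=
  fun V => (\int[lebesgue_measure]_(x in V) (laplace_pdf b x)%:E)%E.

Definition iid_with_law {R : realType} (d : measure_display)
  (T : measurableType d) (P : probability T R) (k : nat)
  (Z : 'I_k -> T -> R) (mu : set R -> \bar R) : Prop :=
  (forall i, measurable_fun setT (Z i)) /\
  (forall B : 'I_k -> set R, (forall i, measurable (B i)) ->
     fine (P (\bigcap_(i in [set: 'I_k]) (Z i @^-1` B i)))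
     = \prod_(i < k) fine (mu (B i))).

Definition count_of (n k : nat) (x : {ffun 'I_n -> 'I_k}) (i : 'I_k) : nat :=
  #|[pred j | x j == i]|.

(* Expected l1 loss L(A,s,m,p) of the estimator
     phat_i = N_i/(ms) + Z_i/(ms),
   where the s*m samples x are i.i.d. from p (expectation over them written
   as the finite sum over all outcomes) and the noise Z, independent of the
   samples, lives on the probability space P. *)
Definition noisy_loss {R : realType} (d : measure_display)
  (T : measurableType d) (P : probability T R) (k s m : nat)
  (p : 'I_k -> R) (Z : 'I_k -> T -> R) : \bar R :=
  (\sum_(x : {ffun 'I_(s * m) -> 'I_k})
     (\prod_(j < s * m) p (x j))%:E *
     'E_P[(fun t => \sum_(i < k)
            `|p i - ((count_of x i)%:R / (m * s)%:R + Z i t / (m * s)%:R)|)%R])%E.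

Definition loss_ok {R : realType} (k m s : nat) (mu : set R -> \bar R)
  (alpha : R) : Prop :=
  forall (p : 'I_k -> R), in_simplex p ->
  forall (d : measure_display) (T : measurableType d) (P : probability T R)
    (Z : 'I_k -> T -> R), iid_with_law P Z mu ->
    (noisy_loss P s m p Z <= alpha%:E)%E.

(* "S <= B" where S = min { s >= 1 : sup_p L(s,m,p) <= alpha } is the
   user complexity. *)
Definition user_complexity_le {R : realType} (k m : nat)
  (mu : set R -> \bar R) (alpha B : R) : Prop :=
  exists s : nat, (0 < s)%N /\ s%:R <= B /\ loss_ok k m s mu alpha.

(* Main.v *)
Require Import Defs.
From HB Require Import structures.
From mathcomp Require Import all_boot all_order all_algebra.
From mathcomp Require Import all_classical all_reals all_analysis.
From mathcomp Require Import ring lra measurable_realfun.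
Import Order.TTheory GRing.Theory Num.Theory.
Local Open Scope ring_scope.
Set Implicit Arguments. Unset Strict Implicit. Unset Printing Implicit Defensive.

Section comb.
Variables (R : realType) (k n : nat) (p : 'I_k -> R).

Definition wt (x : {ffun 'I_n -> 'I_k}) : R := \prod_(j < n) p (x j).

Lemma factor (g : 'I_n -> 'I_k -> R) :
  \sum_(x : {ffun 'I_n -> 'I_k}) \prod_(j < n) (p (x j) * g j (x j)) =
  \prod_(j < n) \sum_(y < k) p y * g j y.
Proof. by rewrite bigA_distr_bigA. Qed.

Hypothesis hp : in_simplex p.

Lemma sum_wt : \sum_x wt x = 1.
Proof.
have := factor (fun _ _ => 1).
under eq_bigr do under eq_bigr do rewrite mulr1.
under [in RHS]eq_bigr do under eq_bigr do rewrite mulr1.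
move=> ->; rewrite (proj2 hp); exact: big1.
Qed.

Lemma wt_ge0 x : 0 <= wt x.
Proof. by apply: prodr_ge0 => j _; exact: (proj1 hp). Qed.

Lemma count_R (x : {ffun 'I_n -> 'I_k}) (i : 'I_k) : ((count_of x i)%:R : R) = \sum_(j < n) ((x j == i)%:R : R).
Proof.
rewrite /count_of -sum1_card natr_sum big_mkcond /=.
by apply: eq_bigr => j _; rewrite inE; case: (x j == i).
Qed.

Variable i : 'I_k.
Definition dd (y : 'I_k) : R := (y == i)%:R - p i.

Lemma sum_p_ind : \sum_(y < k) p y * (y == i)%:R = p i.
Proof.
rewrite (bigD1 i) //= eqxx mulr1 big1 ?addr0 // => y /negbTE ->; by rewrite mulr0.
Qed.

Lemma sum_p_dd : \sum_(y < k) p y * dd y = 0.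
Proof.
rewrite /dd; under eq_bigr do rewrite mulrBr.
by rewrite sumrB sum_p_ind -mulr_suml (proj2 hp) mul1r subrr.
Qed.

Lemma sum_p_dd2 : \sum_(y < k) p y * (dd y * dd y) = p i - p i ^+ 2.
Proof.
rewrite /dd.
have E y : p y * (((y == i)%:R - p i) * ((y == i)%:R - p i)) =
   p y * (y == i)%:R * (1 - 2 * p i) + p y * (p i ^+ 2).
  by case: (y == i); rewrite /=; ring.
under eq_bigr do rewrite E.
rewrite big_split /= -mulr_suml -mulr_suml sum_p_ind (proj2 hp); ring.
Qed.

Lemma second (a b : 'I_n) :
  \sum_x wt x * (dd (x a) * dd (x b)) = if a == b then p i - p i ^+ 2 else 0.
Proof.
pose h (j : 'I_n) (y : 'I_k) := (if j == a then dd y else 1) * (if j == b then dd y else 1).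
have pw x : wt x * (dd (x a) * dd (x b)) = \prod_(j < n) (p (x j) * h j (x j)).
  rewrite /h big_split big_split /= /wt -!big_mkcond /=.
  by rewrite !big_pred1_eq mulrA.
under eq_bigr do rewrite pw.
rewrite factor (bigD1 a) //=.
have hj (j : 'I_n) : j != a -> \sum_(y < k) p y * h j y = if j == b then 0 else 1.
  move=> /negbTE ja; rewrite /h ja; have [_|jb] := eqVneq j b; rewrite /=.
    by under eq_bigr do rewrite mul1r; exact: sum_p_dd.
  by under eq_bigr do rewrite !mulr1; exact: (proj2 hp).
have [ab|ab] := eqVneq a b.
  subst b; rewrite [X in _ * X]big1 ?mulr1.
    by rewrite /h; under eq_bigr do rewrite eqxx; exact: sum_p_dd2.
  by move=> j ja; rewrite hj // (negbTE ja).
rewrite /h eqxx (negbTE ab).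
by under eq_bigr do rewrite mulr1; rewrite sum_p_dd mul0r.
Qed.


Lemma var_i : \sum_x wt x * (\sum_(j < n) dd (x j)) ^+ 2 = n%:R * (p i - p i ^+ 2).
Proof.
have E x : wt x * (\sum_(j < n) dd (x j)) ^+ 2 =
    \sum_(a < n) \sum_(b < n) wt x * (dd (x a) * dd (x b)).
  rewrite expr2 mulr_suml mulr_sumr; apply: eq_bigr => a _.
  by rewrite mulr_sumr mulr_sumr.
under eq_bigr do rewrite E.
rewrite exchange_big /=.
under eq_bigr do rewrite exchange_big /=.
under eq_bigr do under eq_bigr do rewrite second.
under eq_bigr => a _ do rewrite -big_mkcond /= (big_pred1 a) //=.
by rewrite sumr_const card_ord mulr_natl.
Qed.

Lemma dev (x : {ffun 'I_n -> 'I_k}) : (0 < n)%N ->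
  p i - (count_of x i)%:R / n%:R = - (\sum_(j < n) dd (x j)) / n%:R.
Proof.
move=> n0; have nz : (n%:R : R) != 0 by rewrite pnatr_eq0 -lt0n.
rewrite /dd sumrB sumr_const card_ord -count_R.
by field.
Qed.

End comb.

Section l1.
Variables (R : realType) (k n : nat) (p : 'I_k -> R).
Hypothesis hp : in_simplex p.

Lemma abs_quad (y c : R) : 0 < c -> `|y| <= (y ^+ 2 / c + c) / 2.
Proof.
move=> c0; rewrite -[y ^+ 2](real_normK (num_real y)).
have h0 : 0 <= (`|y| - c) ^+ 2 by exact: sqr_ge0.
set a := `|y| in h0 *.
rewrite ler_pdivlMr // -subr_ge0.
have -> : (a ^+ 2 / c + c) - a * 2 = (a - c) ^+ 2 / c.
  by field; rewrite gt_eqF.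
by apply: divr_ge0 => //; exact: ltW.
Qed.

Lemma l1_bound (c : R) : 0 < c -> (0 < n)%N ->
  \sum_(x : {ffun 'I_n -> 'I_k}) wt p x * \sum_(i < k) `|p i - (count_of x i)%:R / n%:R|
  <= ((n%:R * c)^-1 + k%:R * c) / 2.
Proof.
move=> c0 n0.
have nz : (n%:R : R) != 0 by rewrite pnatr_eq0 -lt0n.
have n0' : (0 : R) < n%:R by rewrite ltr0n.
apply: (@le_trans _ _ (\sum_(x : {ffun 'I_n -> 'I_k}) wt p x * \sum_(i < k)
     (((p i - (count_of x i)%:R / n%:R) ^+ 2 / c + c) / 2))).
  apply: ler_sum => x _; apply: ler_wpM2l; first exact: wt_ge0.
  by apply: ler_sum => i _; exact: abs_quad.
under eq_bigr do rewrite mulr_sumr.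
rewrite exchange_big /=.
have E i : \sum_(x : {ffun 'I_n -> 'I_k}) wt p x *
     (((p i - (count_of x i)%:R / n%:R) ^+ 2 / c + c) / 2)
   = ((p i - p i ^+ 2) / (n%:R * c) + c) / 2.
  have F x : wt p x * (((p i - (count_of x i)%:R / n%:R) ^+ 2 / c + c) / 2)
      = (wt p x * (\sum_(j < n) dd p i (x j)) ^+ 2) / (n%:R ^+ 2 * c * 2) + wt p x * (c / 2).
    rewrite dev //; field; by rewrite nz gt_eqF.
  under eq_bigr do rewrite F.
  rewrite big_split /= -mulr_suml -mulr_suml var_i // sum_wt // mul1r.
  by field; rewrite nz gt_eqF.
under eq_bigr do rewrite E.
have G i : ((p i - p i ^+ 2) / (n%:R * c) + c) / 2 <= (p i / (n%:R * c) + c) / 2.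
  rewrite ler_pM2r // lerD2r ler_pM2r ?invr_gt0 ?mulr_gt0 //.
  by rewrite lerBlDr lerDl sqr_ge0.
apply: (le_trans (ler_sum _ (fun i _ => G i))).
rewrite -mulr_suml big_split /= -mulr_suml (proj2 hp) sumr_const card_ord.
by rewrite mul1r mulr_natl [in X in _ <= X]mulr_natl.
Qed.

End l1.

Local Open Scope classical_set_scope.
Section marg.
Variables (R : realType) (d : measure_display) (T : measurableType d)
  (P : probability T R) (k : nat) (Z : 'I_k -> T -> R) (mu : set R -> \bar R).
Hypothesis hZ : iid_with_law P Z mu.
Hypothesis mu0 : forall B, (0 <= mu B)%E.

Lemma fineP (A : set T) : measurable A -> P A = (fine (P A))%:E.
Proof. by move=> mA; rewrite fineK // fin_num_measure. Qed.

Lemma mu_setT (i : 'I_k) : fine (mu setT) = 1.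
Proof.
have := proj2 hZ (fun _ => setT) (fun _ => measurableT).
have -> : \bigcap_(j in [set: 'I_k]) (Z j @^-1` setT) = setT.
  by apply/seteqP; split => // t _ j _.
rewrite probability_setT /= prodr_const card_ord => /esym /eqP.
rewrite pexpr_eq1 ?fine_ge0 //; first by move/eqP.
by case: i => [i ik]; apply: leq_ltn_trans ik.
Qed.

Lemma marginal (i : 'I_k) (B : set R) : measurable B ->
  P (Z i @^-1` B) = (fine (mu B))%:E.
Proof.
move=> mB.
have := proj2 hZ (fun j => if j == i then B else setT)
  (fun j => if j == i as b return measurable (if b then B else setT) then mB else measurableT).
have -> : \bigcap_(j in [set: 'I_k]) (Z j @^-1` (if j == i then B else setT)) = Z i @^-1` B.
  apply/seteqP; split => t /=.
    by move=> /(_ i I); rewrite eqxx.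
  by move=> Bt j _; case: eqVneq => [->|].
rewrite (bigD1 i) //= eqxx big1 ?mulr1; last by move=> j /negbTE ->; exact: mu_setT.
move=> <-; apply: fineP.
by have := proj1 hZ i measurableT B mB; rewrite setTI.
Qed.

End marg.

Section tail.
Variables (R : realType) (h c : R).
Hypothesis h0 : 0 < h.

Definition Bn (n : nat) : set R :=
  `[n%:R * h, n.+1%:R * h[%classic `|` `]- (n.+1%:R * h), - (n%:R * h)]%classic.

Lemma mBn n : measurable (Bn n).
Proof. by apply: measurableU; exact: measurable_itv. Qed.

Lemma Bn_ge n x : Bn n x -> n%:R * h <= `|x|.
Proof.
have := ler_norm x; have := ler_norm (- x); rewrite normrN.
move=> ? ?; rewrite /Bn /=; case => /=; rewrite in_itv /= => /andP [] ? ?; lra.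
Qed.

Lemma Bn_in x : Bn (Num.truncn (`|x| / h)) x.
Proof.
set N := Num.truncn _.
have := Num.Theory.truncn_itv (divr_ge0 (normr_ge0 x) (ltW h0)).
rewrite -/N => /andP [] a b.
have a' : N%:R * h <= `|x| by rewrite -ler_pdivlMr.
have b' : `|x| < N.+1%:R * h by rewrite -ltr_pdivrMr.
case: (lerP 0 x) => x0.
  by left; rewrite /= in_itv /=; rewrite ger0_norm // in a' b'; rewrite a' b'.
right; rewrite /= in_itv /=; rewrite ltr0_norm // in a' b'.
by apply/andP; split; lra.
Qed.

Lemma leb_Bn n : (lebesgue_measure (Bn n) <= (2 * h)%:E)%E.
Proof.
have l1 : n%:R * h < n.+1%:R * h by rewrite ltr_pM2r // ltr_nat.
have l2 : - (n.+1%:R * h) < - (n%:R * h) by rewrite ltrN2.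
have e1 := lebesgue_measure_itv `[n%:R * h, n.+1%:R * h[%R.
have e2 := lebesgue_measure_itv `]- (n.+1%:R * h), - (n%:R * h)]%R.
rewrite /= !lte_fin l1 l2 in e1 e2.
apply: (le_trans (measureU2 lebesgue_measure _ _)); try exact: measurable_itv.
rewrite [X in (X + _)%E]e1 [X in (_ + X)%E]e2 -!EFinD lee_fin.
rewrite -[n.+1]addn1 natrD; lra.
Qed.


Variable f : R -> R.
Hypothesis f0 : forall x, 0 <= f x.
Hypothesis mf : measurable_fun setT f.
Hypothesis c0 : 0 <= c.
Hypothesis hdec : forall (n : nat) x, n%:R * h <= `|x| -> f x <= c / 4 ^+ n.

Lemma int_Bn n :
  (\int[lebesgue_measure]_(x in Bn n) (f x)%:E <= (2 * h * (c / 4 ^+ n))%:E)%E.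
Proof.
have cn : 0 <= c / 4 ^+ n by rewrite divr_ge0 // exprn_ge0.
apply: (@le_trans _ _ (\int[lebesgue_measure]_(x in Bn n) (cst (c / 4 ^+ n)%:E x))%E).
  apply: ge0_le_integral => //.
  - exact: mBn.
  - by move=> x _; rewrite lee_fin.
  - by apply/measurable_EFinP; apply: measurable_funTS.
  - by move=> x /Bn_ge Bx; rewrite lee_fin; exact: hdec.
rewrite integral_cst; last exact: mBn.
rewrite (mulrC (2 * h)) EFinM; have cn2 : (0 <= (c / 4 ^+ n)%:E)%E by rewrite lee_fin.
exact: (lee_wpmul2l cn2 (leb_Bn n)).
Qed.

Lemma fine_int_Bn n :
  fine (\int[lebesgue_measure]_(x in Bn n) (f x)%:E) <= 2 * h * (c / 4 ^+ n).
Proof.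
have i0 : (0 <= \int[lebesgue_measure]_(x in Bn n) (f x)%:E)%E.
  by apply: integral_ge0 => x _; rewrite lee_fin.
have := int_Bn n.
move: i0; case: (\int[lebesgue_measure]_(x in Bn n) (f x)%:E)%E => //= r; rewrite !lee_fin.
Qed.

Lemma pointwise (z : R) :
  ((`|z|)%:E <= \sum_(n <oo) ((n.+1%:R * h)%:E * (\1_(Bn n) z)%:E))%E.
Proof.
set N := Num.truncn (`|z| / h).
apply: (le_trans _ (nneseries_lim_ge (m := 0) N.+1 _)); last first.
  by move=> n _ _; rewrite mule_ge0 // lee_fin ?indicE ?ler0n // mulr_ge0 // ltW.
rewrite big_nat_recr //=.
apply: (le_trans _ (leeDr _ _)); last first.
  by apply: sume_ge0 => n _; rewrite mule_ge0 // lee_fin ?indicE ?ler0n // mulr_ge0 // ltW.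
rewrite indicE mem_set; last exact: Bn_in.
rewrite mule1 lee_fin.
have := Num.Theory.truncn_itv (divr_ge0 (normr_ge0 z) (ltW h0)).
rewrite -/N => /andP [] _ b.
by apply: ltW; rewrite -ltr_pdivrMr.
Qed.


Lemma real_step (n : nat) :
  n.+1%:R * h * (2 * h * (c / 4 ^+ n)) <= 4 * h ^+ 2 * c / (2 ^ (n + 1))%:R.
Proof.
have e4 : (4 : R) ^+ n = 2 ^+ n * 2 ^+ n by rewrite -exprMn; congr (_ ^+ _); lra.
have hn : (n.+1%:R : R) <= 2 ^+ n.
  by rewrite -natrX ler_nat; exact: ltn_expl.
rewrite natrX exprD expr1 e4.
have p2 : (0 : R) < 2 ^+ n by rewrite exprn_gt0.
have q0 : (2 : R) ^+ n != 0 by rewrite gt_eqF.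
have -> : n.+1%:R * h * (2 * h * (c / (2 ^+ n * 2 ^+ n))) =
  (n.+1%:R / 2 ^+ n) * (2 * h ^+ 2 * c / 2 ^+ n) by field.
have -> : 4 * h ^+ 2 * c / (2 ^+ n * 2) = 1 * (2 * h ^+ 2 * c / 2 ^+ n) by field.
apply: ler_wpM2r.
  by rewrite divr_ge0 ?exprn_ge0 // mulr_ge0 // mulr_ge0 // sqr_ge0.
by rewrite ler_pdivrMr // mul1r.
Qed.

Lemma E_abs_bound d (T : measurableType d) (P : probability T R) (Z : T -> R) :
  measurable_fun setT Z ->
  (forall B, measurable B -> P (Z @^-1` B) =
     (fine (\int[lebesgue_measure]_(x in B) (f x)%:E))%:E) ->
  (\int[P]_t (`|Z t|)%:E <= (4 * h ^+ 2 * c)%:E)%E.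
Proof.
move=> mZ hPZ.
pose g (n : nat) (t : T) := ((n.+1%:R * h * \1_(Z @^-1` Bn n) t)%:E).
have mg n : measurable_fun setT (g n).
  apply/measurable_EFinP; apply: measurable_funM => //.
  apply: measurable_indic; rewrite -[X in measurable X]setTI; exact: mZ (mBn n).
have g0 n t : (0 <= g n t)%E by rewrite lee_fin mulr_ge0 ?indicE ?ler0n // mulr_ge0 // ltW.
apply: (@le_trans _ _ (\int[P]_t (\sum_(n <oo) g n t))%E).
  apply: ge0_le_integral => //.
  - apply/measurable_EFinP; apply: measurableT_comp => //.
  - exact: ge0_emeasurable_sum.
  - move=> t _; apply: (le_trans (pointwise (Z t))).
    apply: lee_nneseries => [n _ _|n _].
      by rewrite mule_ge0 // lee_fin ?indicE ?ler0n // mulr_ge0 // ltW.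
    by rewrite /g EFinM.
rewrite (integral_nneseries P measurableT (f := g) mg) //.
apply: (@le_trans _ _ (\sum_(n <oo) ((4 * h ^+ 2 * c) / (2 ^ (n + 1))%:R)%:E)%E).
  apply: lee_nneseries => [n _ _|n _]; first by apply: integral_ge0.
  rewrite /g; under eq_integral do rewrite EFinM.
  have mi : measurable_fun setT (fun t => ((\1_(Z @^-1` Bn n) t : R))%:E).
    apply/measurable_EFinP; apply: measurable_indic.
    by rewrite -[X in measurable X]setTI; exact: mZ (mBn n).
  rewrite (ge0_integralZl_EFin P measurableT _ mi); last by rewrite mulr_ge0 // ltW.
    2: by move=> t _; rewrite lee_fin indicE ler0n.
  rewrite integral_indic //; last by rewrite -[X in measurable X]setTI; exact: mZ (mBn n).
  rewrite setIT [X in (_ * X)%E](hPZ _ (mBn n)).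
  rewrite -EFinM lee_fin; apply: le_trans (real_step n).
  apply: ler_wpM2l; first by rewrite mulr_ge0 // ltW.
  exact: fine_int_Bn.
have := @cvg_geometric_eseries_half R (4 * h ^+ 2 * c) 0.
rewrite expr0 divr1 => /cvg_lim => <- //.
Qed.

End tail.

Section dists.
Variable R : realType.

Lemma four_pow (n : nat) (y : R) : 2 * n%:R <= y -> expR (- y) <= (4 ^+ n)^-1.
Proof.
move=> hy.
have e1 : (2 : R) <= expR 1 by have := expR_ge1Dx (1 : R); lra.
have e2 : (4 : R) <= expR 2.
  have -> : (2 : R) = 2%:R * 1 by rewrite mulr1.
  rewrite expRM_natl; nra.
apply: (le_trans (y := expR (- (n%:R * 2)))).
  by rewrite ler_expR lerN2 mulrC.
rewrite expRN expRM_natl.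
rewrite lef_pV2 ?posrE ?exprn_gt0 ?expR_gt0 //.
  by apply: lerXn2r => //; rewrite nnegrE // ?expR_ge0; lra.
Qed.

Lemma laplace_E (b : R) (hb : 0 < b) d (T : measurableType d) (P : probability T R)
  (Z : T -> R) : measurable_fun setT Z ->
  (forall B, measurable B -> P (Z @^-1` B) = (fine (laplace_prob b B))%:E) ->
  (\int[P]_t (`|Z t|)%:E <= (8 * b)%:E)%E.
Proof.
move=> mZ hPZ.
have h0 : 0 < 2 * b by lra.
have c0 : 0 <= (2 * b)^-1 by rewrite invr_ge0; lra.
have f0 x : 0 <= laplace_pdf b x by rewrite mulr_ge0 ?expR_ge0.
have mf : measurable_fun setT (laplace_pdf b).
  apply: measurable_funM => //; apply: measurableT_comp; first exact: measurable_expR.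
  apply: measurable_funM => //; apply: measurableT_comp => //; exact: normr_measurable.
have hdec (n : nat) x : n%:R * (2 * b) <= `|x| -> laplace_pdf b x <= (2 * b)^-1 / 4 ^+ n.
  move=> hx; rewrite /laplace_pdf ler_wpM2l // mulNr; apply: four_pow.
  by rewrite ler_pdivlMr //; lra.
have := E_abs_bound h0 f0 mf c0 hdec mZ hPZ.
have -> : 4 * (2 * b) ^+ 2 * (2 * b)^-1 = 8 * b by field; lra.
by [].
Qed.

Lemma normal_E (sg : R) (hs : 0 < sg) d (T : measurableType d) (P : probability T R)
  (Z : T -> R) : measurable_fun setT Z ->
  (forall B, measurable B -> P (Z @^-1` B) = (fine (normal_prob 0 sg B))%:E) ->
  (\int[P]_t (`|Z t|)%:E <= (16 * sg)%:E)%E.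
Proof.
move=> mZ hPZ.
have h0 : 0 < 2 * sg by lra.
have c0 : 0 <= sg^-1 by rewrite invr_ge0; lra.
have f0 x : 0 <= normal_pdf 0 sg x by exact: normal_pdf_ge0.
have mf : measurable_fun setT (normal_pdf (0 : R) sg) by exact: measurable_normal_pdf.
have s0 : sg != 0 by rewrite gt_eqF.
have pk : normal_peak sg <= sg^-1.
  rewrite /normal_peak lef_pV2 ?posrE ?sqrtr_gt0 //; last first.
    by rewrite mulrn_wgt0 // mulr_gt0 ?pi_gt0 // exprn_gt0.
  rewrite -[leLHS](gtr0_norm hs) -sqrtr_sqr ler_sqrt; last first.
    by rewrite mulrn_wge0 // mulr_ge0 ?pi_ge0 // sqr_ge0.
  have := pi_ge2 R; have := sqr_ge0 sg; rewrite mulr2n; nra.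
have hdec (n : nat) x : n%:R * (2 * sg) <= `|x| -> normal_pdf 0 sg x <= sg^-1 / 4 ^+ n.
  move=> hx; rewrite normal_pdfE //= /normal_fun subr0.
  apply: ler_pM; [exact: normal_peak_ge0|exact: expR_ge0|exact: pk|].
  rewrite mulNr; apply: four_pow.
  have n0 : (0 : R) <= n%:R by [].
  have nn : (n%:R : R) <= n%:R ^+ 2.
    case: n hx n0 => [|n] hx n0; first by rewrite expr0n.
    by rewrite -natrX ler_nat expnS leq_pmulr // expn_gt0.
  have x2 : (n%:R * (2 * sg)) ^+ 2 <= x ^+ 2.
    rewrite -(real_normK (num_real x)); apply: lerXn2r => //.
    - by rewrite nnegrE mulr_ge0 // mulr_ge0 //; lra.
  have s2 : 0 < sg ^+ 2 *+ 2 by rewrite mulrn_wgt0 // exprn_gt0.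
  rewrite ler_pdivlMr //.
  have e : (n%:R * (2 * sg)) ^+ 2 = 4 * n%:R ^+ 2 * sg ^+ 2 by ring.
  rewrite e in x2; rewrite mulr2n.
  have := sqr_ge0 sg; nra.
have := E_abs_bound h0 f0 mf c0 hdec mZ hPZ.
have -> : 4 * (2 * sg) ^+ 2 * sg^-1 = 16 * sg by field; lra.
by [].
Qed.

End dists.

Section general.
Variable R : realType.

Lemma inner_bound d (T : measurableType d) (P : probability T R) (k : nat)
  (Z : 'I_k -> T -> R) (a : 'I_k -> R) (N K : R) :
  0 < N -> (forall i, measurable_fun setT (Z i)) ->
  (forall i, (\int[P]_t (`|Z i t|)%:E <= K%:E)%E) ->
  ('E_P[(fun t => \sum_(i < k) `|a i - Z i t / N|)%R] <=
    (\sum_(i < k) `|a i| + k%:R * (N^-1 * K))%:E)%E.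
Proof.
move=> N0 mZ hE.
rewrite unlock.
have mabs i : measurable_fun setT (fun t => `|Z i t|).
  by apply: measurableT_comp => //; exact: normr_measurable.
apply: (@le_trans _ _ (\int[P]_t ((\sum_(i < k) `|a i|)%:E +
    (\sum_(i < k) (N^-1 * `|Z i t|))%:E))%E).
  apply: ge0_le_integral => //.
  - by move=> t _; rewrite lee_fin sumr_ge0.
  - apply/measurable_EFinP; apply: measurable_sum => i.
    apply: measurableT_comp; first exact: normr_measurable.
    apply: measurable_funB => //; apply: measurable_funM => //.
  - apply: emeasurable_funD => //; apply/measurable_EFinP.
    by apply: measurable_sum => i; apply: measurable_funM.
  - move=> t _; rewrite -EFinD lee_fin -big_split /=.
    apply: ler_sum => i _; apply: (le_trans (ler_normB _ _)).
    by rewrite normrM normfV (gtr0_norm N0) mulrC.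
rewrite ge0_integralD //; last first.
  - by apply/measurable_EFinP; apply: measurable_sum => i; apply: measurable_funM.
  - by move=> t _; rewrite lee_fin sumr_ge0 // => i _; rewrite mulr_ge0 // invr_ge0 ltW.
  - by move=> t _; rewrite lee_fin sumr_ge0.
rewrite integral_cst // [X in (_ * X)%E]probability_setT mule1 EFinD leeD2l //.
under eq_integral do rewrite -sumEFin.
rewrite ge0_integral_sum //; last first.
  - by move=> i t _; rewrite lee_fin mulr_ge0 // invr_ge0 ltW.
  - by move=> i; apply/measurable_EFinP; apply: measurable_funM.
apply: (@le_trans _ _ (\sum_(i < k) ((N^-1 * K)%:E))%E); last first.
  by rewrite sumEFin sumr_const card_ord mulr_natl.
apply: lee_sum => i _.
under eq_integral do rewrite EFinM.
rewrite ge0_integralZl_EFin //; last 2 first.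
  - by apply/measurable_EFinP.
  - by rewrite invr_ge0 ltW.
rewrite EFinM; apply: lee_wpmul2l; first by rewrite lee_fin invr_ge0 ltW.
exact: hE.
Qed.


Lemma general (k m s : nat) (mu : set R -> \bar R) (alpha K : R) :
  (0 < k)%N -> (0 < m)%N -> (0 < s)%N -> 0 < alpha -> 0 <= K ->
  (forall B, (0 <= mu B)%E) ->
  (forall d (T : measurableType d) (P : probability T R) (Z : T -> R),
     measurable_fun setT Z ->
     (forall B, measurable B -> P (Z @^-1` B) = (fine (mu B))%:E) ->
     (\int[P]_t (`|Z t|)%:E <= K%:E)%E) ->
  4 * k%:R <= alpha ^+ 2 * (m * s)%:R -> 2 * k%:R * K <= alpha * (m * s)%:R ->
  loss_ok k m s mu alpha.
Proof.
move=> k0 m0 s0 a0 K0 mu0 hE h1 h2 p hp d T P Z hZ.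
rewrite /noisy_loss.
have eN : ((m * s)%:R : R) = (s * m)%:R by rewrite mulnC.
have N0 : (0 : R) < (m * s)%:R by rewrite ltr0n muln_gt0 m0 s0.
have hEi i : (\int[P]_t (`|Z i t|)%:E <= K%:E)%E.
  exact: hE _ _ P (Z i) (proj1 hZ i) (marginal hZ mu0 i).
pose A (x : {ffun 'I_(s * m) -> 'I_k}) :=
  \sum_(i < k) `|p i - (count_of x i)%:R / (m * s)%:R|.
have inner x : ('E_P[(fun t => \sum_(i < k) `|p i - ((count_of x i)%:R / (m * s)%:R
      + Z i t / (m * s)%:R)|)%R] <= (A x + k%:R * ((m * s)%:R^-1 * K))%:E)%E.
  have := @inner_bound _ _ P k Z (fun i => p i - (count_of x i)%:R / (m * s)%:R) _ _ N0 (proj1 hZ) hEi.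
  congr (_ <= _)%E; congr expectation; apply/funext => t /=.
  by apply: eq_bigr => i _; rewrite opprD addrA.
apply: (@le_trans _ _ (\sum_(x : {ffun 'I_(s * m) -> 'I_k})
    ((\prod_(j < s * m) p (x j)) * (A x + k%:R * ((m * s)%:R^-1 * K)))%:E)%E).
  apply: lee_sum => x _; rewrite EFinM; apply: lee_wpmul2l; last exact: inner.
  by rewrite lee_fin; exact: (wt_ge0 hp).
rewrite sumEFin lee_fin.
under eq_bigr do rewrite mulrDr.
rewrite big_split /= -mulr_suml.
have sw : \sum_(x : {ffun 'I_(s * m) -> 'I_k}) wt p x = 1 by apply: sum_wt.
rewrite /wt in sw; rewrite sw mul1r.
have c0 : 0 < alpha / (2 * k%:R) by rewrite divr_gt0 // mulr_gt0 // ltr0n.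
have L : \sum_(x : {ffun 'I_(s * m) -> 'I_k}) wt p x *
    \sum_(i < k) `|p i - (count_of x i)%:R / (s * m)%:R|
  <= (((s * m)%:R * (alpha / (2 * k%:R)))^-1 + k%:R * (alpha / (2 * k%:R))) / 2.
  by apply: l1_bound => //; rewrite muln_gt0 s0 m0.
rewrite -eN /wt in L.
apply: (le_trans (lerD L (lexx _))).
set N := ((m * s)%:R : R) in N0 h1 h2 *.
have k0' : (0 : R) < k%:R by rewrite ltr0n.
have -> : ((N * (alpha / (2 * k%:R)))^-1 + k%:R * (alpha / (2 * k%:R))) / 2 +
    k%:R * (N^-1 * K) = k%:R / (N * alpha) + alpha / 4 + k%:R * K / N.
  by field; rewrite (gt_eqF a0) !pnatr_eq0 -!lt0n s0 m0 k0.
have b1 : k%:R / (N * alpha) <= alpha / 4.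
  rewrite ler_pdivrMr ?mulr_gt0 //; nra.
have b2 : k%:R * K / N <= alpha / 2.
  rewrite ler_pdivrMr //; nra.
lra.
Qed.

End general.

Close Scope classical_set_scope.
Unset Implicit Arguments.

Lemma choose_s (R : realType) (X : R) : 0 <= X ->
  exists s : nat, (0 < s)%N /\ X <= s%:R /\ s%:R <= X + 1.
Proof.
move=> X0; exists (Num.truncn X).+1; split => //.
have /andP [a b] := Num.Theory.truncn_itv X0.
split; first exact: ltW.
by rewrite -addn1 natrD lerD2r.
Qed.

Theorem lemma1 :
  forall R : realType, exists C : R, 0 < C /\
  (forall (k m : nat) (alpha eps : R),
     (0 < k)%N -> (0 < m)%N -> 0 < alpha -> alpha <= 1 -> 0 < eps ->
     user_complexity_le k m (laplace_prob (2 * m%:R / eps)) alpha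
       (C * (k%:R / (m%:R * alpha ^+ 2) + k%:R / (alpha * eps)) + 1)) /\
  (forall (k m : nat) (alpha eps delta : R),
     (0 < k)%N -> (0 < m)%N -> 0 < alpha -> alpha <= 1 -> 0 < eps ->
     eps <= 1 -> 0 < delta -> delta <= 2^-1 ->
     user_complexity_le k m
       (normal_prob 0 (2 * m%:R * Num.sqrt (ln (5 / 4 / delta)) / eps)) alpha
       (C * (k%:R / (m%:R * alpha ^+ 2)
             + k%:R / (alpha * eps) * Num.sqrt (ln (delta^-1))) + 1)).
Proof.
move=> R; exists 128; split; first by [].
split.
- move=> k m alpha eps k0 m0 a0 _ e0.
  have k0' : (0 : R) < k%:R by rewrite ltr0n.
  have m0' : (0 : R) < m%:R by rewrite ltr0n.
  set b := 2 * m%:R / eps.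
  have hb : 0 < b by rewrite divr_gt0 // mulr_gt0.
  set t1 := k%:R / (m%:R * alpha ^+ 2).
  set t2 := k%:R / (alpha * eps).
  have t10 : 0 <= t1 by rewrite divr_ge0 ?ler0n // mulr_ge0 ?ler0n // sqr_ge0.
  have t20 : 0 <= t2 by rewrite divr_ge0 ?ler0n // mulr_ge0 // ltW.
  have [s [s0 [sX sB]]] := @choose_s R _ (addr_ge0 (mulr_ge0 (ler0n _ 4) t10) (mulr_ge0 (ler0n _ 32) t20)).
  exists s; split => //; split; first by lra.
  apply: (@general R k m s _ alpha (8 * b)) => //.
  + by apply: ltW; rewrite mulr_gt0.
  + by move=> B; apply: integral_ge0 => x _; rewrite lee_fin mulr_ge0 ?expR_ge0 // invr_ge0 mulr_ge0 // ltW.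
  + by move=> d T P Z mZ hPZ; exact: laplace_E.
  + have : 4 * t1 <= s%:R by lra.
    rewrite /t1 natrM mulrA ler_pdivrMr ?mulr_gt0 ?exprn_gt0 //; nra.
  + have : 32 * t2 <= s%:R by lra.
    rewrite /t2 /b natrM mulrA ler_pdivrMr ?mulr_gt0 //.
    move=> h; rewrite -[leLHS](@mulfK _ eps) ?gt_eqF //.
    have -> : 2 * k%:R * (8 * (2 * m%:R / eps)) * eps = 32 * k%:R * m%:R.
      by field; rewrite gt_eqF.
    rewrite ler_pdivrMr //; nra.
- move=> k m alpha eps delta k0 m0 a0 _ e0 _ d0 d1.
  have k0' : (0 : R) < k%:R by rewrite ltr0n.
  have m0' : (0 : R) < m%:R by rewrite ltr0n.
  set L := ln (5 / 4 / delta).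
  set y := ln delta^-1.
  have di : 2 <= delta^-1.
    by rewrite -[leLHS]invrK lef_pV2 ?posrE ?invr_gt0 //; lra.
  have y0 : 0 <= y by rewrite /y ln_ge0 //; lra.
  have L0 : 0 < L.
    rewrite /L ln_gt0 // ltr_pdivlMr // mul1r; lra.
  have Ly : L <= 2 * y.
    rewrite /L /y mulrC lnM ?posrE ?invr_gt0 //.
    have : ln (5 / 4 : R) <= ln delta^-1.
      by rewrite ler_ln ?posrE ?invr_gt0 //; lra.
    lra.
  have sq : Num.sqrt L <= 2 * Num.sqrt y.
    have -> : 2 * Num.sqrt y = Num.sqrt (4 * y).
      rewrite sqrtrM; last lra.
      have -> : (4 : R) = 2 ^+ 2 by rewrite expr2; lra.
      by rewrite sqrtr_sqr gtr0_norm.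
    rewrite ler_sqrt; lra.
  have sL0 : 0 < Num.sqrt L by rewrite sqrtr_gt0.
  set sg := 2 * m%:R * Num.sqrt L / eps.
  have hs : 0 < sg by rewrite divr_gt0 // !mulr_gt0.
  set t1 := k%:R / (m%:R * alpha ^+ 2).
  set t2 := k%:R / (alpha * eps) * Num.sqrt L.
  have t10 : 0 <= t1 by rewrite divr_ge0 ?ler0n // mulr_ge0 ?ler0n // sqr_ge0.
  have t20 : 0 <= t2 by rewrite mulr_ge0 ?divr_ge0 ?ler0n // ?mulr_ge0 // ltW.
  have [s [s0 [sX sB]]] := @choose_s R _ (addr_ge0 (mulr_ge0 (ler0n _ 4) t10) (mulr_ge0 (ler0n _ 64) t20)).
  exists s; split => //; split.
    have t2y : t2 <= 2 * (k%:R / (alpha * eps) * Num.sqrt y).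
      rewrite /t2 mulrCA ler_wpM2l //; first by rewrite divr_ge0 ?ler0n // mulr_ge0 // ltW.
    lra.
  apply: (@general R k m s _ alpha (16 * sg)) => //.
  + by apply: ltW; rewrite mulr_gt0.
  + by move=> d T P Z mZ hPZ; exact: normal_E.
  + have : 4 * t1 <= s%:R by lra.
    rewrite /t1 natrM mulrA ler_pdivrMr ?mulr_gt0 ?exprn_gt0 //; nra.
  + have : 64 * t2 <= s%:R by lra.
    rewrite /t2 /sg natrM.
    have -> : 64 * (k%:R / (alpha * eps) * Num.sqrt L) = (64 * k%:R * Num.sqrt L) / (alpha * eps).
      by field; rewrite !gt_eqF.
    rewrite ler_pdivrMr ?mulr_gt0 // => h.
    rewrite -[leLHS](@mulfK _ eps) ?gt_eqF //.
    have -> : 2 * k%:R * (16 * (2 * m%:R * Num.sqrt L / eps)) * eps = 64 * k%:R * m%:R * Num.sqrt L.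
      by field; rewrite gt_eqF.
    rewrite ler_pdivrMr //; nra.
Qed.
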